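(* If for some $u$ and some $i\in\{1,2,3\}$ the cusp $P_i'$ lies on $\mathcal{E}$, then $P_i'=P_i$, and this point is one of the four points $\frac{1}{\sqrt{a^2+b^2}}\left(\pm a^2,\pm b^2\right)$.
   Context: Let $a>b>0$ and $c>0$ with $c^2=a^2-b^2$. Let $\mathcal{E}$ be the ellipse $x^2/a^2+y^2/b^2=1$, parametrized by $P(t)=(a\cos t,b\sin t)$. For $u\in\mathbb{R}$ let $M=(a\cos u,b\sin u)$ and $\Delta_u(t)=(x_u(t),y_u(t))$, where $x_u(t)=\frac1a\big(c^2(1+\cos(t+u))\cos t-a^2\cos u\big)$ and $y_u(t)=\frac1b\big(c^2\cos t\sin(t+u)-c^2\sin t-a^2\sin u\big)$ (the negative pedal curve of $\mathcal{E}$ with respect to $M$). For $i=1,2,3$ let $t_i=-u/3-2\pi(i-1)/3$, $P_i=P(t_i)$, and $P_i'=\Delta_u(t_i)$ (the cusps). *)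

(* Defs.v *)
From Stdlib Require Import Reals.
Open Scope R_scope.

Definition ellP (a b t : R) : R * R := (a * cos t, b * sin t).

Definition on_ellipse (a b : R) (p : R * R) : Prop :=
  (fst p) ^ 2 / a ^ 2 + (snd p) ^ 2 / b ^ 2 = 1.

Definition negpedal (a b c u t : R) : R * R :=
  ( / a * (c ^ 2 * (1 + cos (t + u)) * cos t - a ^ 2 * cos u),
    / b * (c ^ 2 * cos t * sin (t + u) - c ^ 2 * sin t - a ^ 2 * sin u) ).

Definition tcusp (u : R) (i : nat) : R :=
  - u / 3 - 2 * PI * INR (i - 1) / 3.

(* Main.v *)
Require Import Defs.
From Stdlib Require Import Reals Lra Psatz.
Open Scope R_scope.

Lemma trig_facts (u : R) (m : nat) :
  let t := - u / 3 - 2 * PI * INR m / 3 in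
  cos u = 4 * cos t ^ 3 - 3 * cos t /\
  sin u = - (3 * sin t - 4 * sin t ^ 3) /\
  cos (t + u) = 2 * cos t ^ 2 - 1 /\
  sin (t + u) = - (2 * sin t * cos t).
Proof.
  intro t.
  assert (H3 : 3 * t = - (u + 2 * INR m * PI)) by (unfold t; field).
  assert (H2 : 2 * t = - ((t + u) + 2 * INR m * PI)) by (unfold t; field).
  assert (Hc3 : cos (3 * t) = cos u) by (rewrite H3, cos_neg, cos_period; reflexivity).
  assert (Hs3 : sin (3 * t) = - sin u) by (rewrite H3, sin_neg, sin_period; reflexivity).
  assert (Hc2 : cos (2 * t) = cos (t + u)) by (rewrite H2, cos_neg, cos_period; reflexivity).
  assert (Hs2 : sin (2 * t) = - sin (t + u)) by (rewrite H2, sin_neg, sin_period; reflexivity).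
  assert (E : 3 * t = 2 * t + t) by ring.
  rewrite E, cos_plus, cos_2a_cos, sin_2a in Hc3.
  rewrite E, sin_plus, cos_2a_cos, sin_2a in Hs3.
  rewrite cos_2a_cos in Hc2. rewrite sin_2a in Hs2.
  pose proof (sin2_cos2 t) as Hp. unfold Rsqr in Hp.
  split; [|split; [|split]].
  - rewrite <- Hc3. assert (sin t * sin t = 1 - cos t * cos t) by lra.
    replace (2 * sin t * cos t * sin t) with (2 * cos t * (sin t * sin t)) by ring.
    rewrite H. ring.
  - replace (sin u) with (- (2 * sin t * cos t * cos t + (2 * cos t * cos t - 1) * sin t)) by lra.
    assert (cos t * cos t = 1 - sin t * sin t) by lra.
    replace (2 * sin t * cos t * cos t + (2 * cos t * cos t - 1) * sin t)
      with (sin t * (4 * (cos t * cos t) - 1)) by ring. rewrite H. ring.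
  - lra.
  - lra.
Qed.

Theorem proposition6p4 (a b c u : R) (i : nat) :
  a > b -> b > 0 -> c > 0 -> c ^ 2 = a ^ 2 - b ^ 2 ->
  (1 <= i <= 3)%nat ->
  on_ellipse a b (negpedal a b c u (tcusp u i)) ->
  negpedal a b c u (tcusp u i) = ellP a b (tcusp u i) /\
  exists s1 s2 : R, (s1 = 1 \/ s1 = -1) /\ (s2 = 1 \/ s2 = -1) /\
    ellP a b (tcusp u i) =
      (s1 * a ^ 2 / sqrt (a ^ 2 + b ^ 2), s2 * b ^ 2 / sqrt (a ^ 2 + b ^ 2)).
Proof.
  intros hab hb hc hc2 hi hE.
  unfold on_ellipse, negpedal, ellP in *. cbn [fst snd] in *.
  unfold tcusp in *.
  set (t := - u / 3 - 2 * PI * INR (i - 1) / 3) in *.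
  destruct (trig_facts u (i - 1)) as [Hcu [Hsu [Hctu Hstu]]].
  fold t in Hcu, Hsu, Hctu, Hstu.
  rewrite Hcu, Hsu, Hctu, Hstu, hc2 in *.
  pose proof (sin2_cos2 t) as Hp. unfold Rsqr in Hp.
  set (C := cos t) in *. set (S := sin t) in *.
  set (k := a ^ 2 + b ^ 2).
  assert (ha : a > 0) by lra.
  assert (Hx : / a * ((a ^ 2 - b ^ 2) * (1 + (2 * C ^ 2 - 1)) * C - a ^ 2 * (4 * C ^ 3 - 3 * C))
              = C * (3 * a ^ 2 - 2 * k * C ^ 2) / a) by (unfold k; field; lra).
  assert (Hy : / b * ((a ^ 2 - b ^ 2) * C * - (2 * S * C) - (a ^ 2 - b ^ 2) * S
                 - a ^ 2 * - (3 * S - 4 * S ^ 3))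
              = S * (3 * b ^ 2 - 2 * k * S ^ 2) / b).
  { assert (HXY : ((a ^ 2 - b ^ 2) * C * - (2 * S * C) - (a ^ 2 - b ^ 2) * S
                 - a ^ 2 * - (3 * S - 4 * S ^ 3)) - S * (3 * b ^ 2 - 2 * k * S ^ 2)
       = -2 * (a ^ 2 - b ^ 2) * S * (C * C + S * S - 1)) by (unfold k; ring).
    replace (C * C + S * S) with 1 in HXY by lra. rewrite Rminus_diag, Rmult_0_r in HXY.
    apply Rminus_diag_uniq in HXY. rewrite HXY. field. lra. }
  rewrite Hx, Hy in *.
  assert (Hpol : (C * (3 * a ^ 2 - 2 * k * C ^ 2)) ^ 2 * b ^ 4
                 + (S * (3 * b ^ 2 - 2 * k * S ^ 2)) ^ 2 * a ^ 4 = a ^ 4 * b ^ 4).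
  { assert (a ^ 2 <> 0) by nra. assert (b ^ 2 <> 0) by nra.
    replace ((C * (3 * a ^ 2 - 2 * k * C ^ 2) / a) ^ 2 / a ^ 2)
      with ((C * (3 * a ^ 2 - 2 * k * C ^ 2)) ^ 2 / a ^ 4) in hE by (field; lra).
    replace ((S * (3 * b ^ 2 - 2 * k * S ^ 2) / b) ^ 2 / b ^ 2)
      with ((S * (3 * b ^ 2 - 2 * k * S ^ 2)) ^ 2 / b ^ 4) in hE by (field; lra).
    replace (a ^ 4 * b ^ 4) with (a ^ 4 * b ^ 4 * 1) by ring. rewrite <- hE.
    field; lra. }
  assert (Hid : (C * (3 * a ^ 2 - 2 * k * C ^ 2)) ^ 2 * b ^ 4
                 + (S * (3 * b ^ 2 - 2 * k * S ^ 2)) ^ 2 * a ^ 4 - a ^ 4 * b ^ 4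
                = 4 * (b ^ 2 - a ^ 2) * (k * C ^ 2 - a ^ 2) ^ 3).
  { assert (S ^ 2 = 1 - C ^ 2) by nra.
    replace ((S * (3 * b ^ 2 - 2 * k * S ^ 2)) ^ 2) with
      (S ^ 2 * (3 * b ^ 2 - 2 * k * S ^ 2) ^ 2) by ring.
    rewrite H. unfold k. ring. }
  assert (Hk : k > 0) by (unfold k; nra).
  assert (Hd : b ^ 2 - a ^ 2 < 0) by nra.
  assert (Hz : (k * C ^ 2 - a ^ 2) ^ 3 = 0).
  { assert (4 * (b ^ 2 - a ^ 2) <> 0) by nra.
    apply (Rmult_eq_reg_l (4 * (b ^ 2 - a ^ 2))); [|assumption]. nra. }
  assert (HC : k * C ^ 2 = a ^ 2).
  { assert (k * C ^ 2 - a ^ 2 = 0); [|lra].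
    destruct (Req_dec (k * C ^ 2 - a ^ 2) 0) as [E0|E0]; [exact E0|]. exfalso. exact (pow_nonzero _ 3 E0 Hz). }
  assert (HS : k * S ^ 2 = b ^ 2) by (unfold k in *; nra).
  split.
  - f_equal.
    + replace (3 * a ^ 2 - 2 * k * C ^ 2) with (a ^ 2) by lra. field; lra.
    + replace (3 * b ^ 2 - 2 * k * S ^ 2) with (b ^ 2) by lra. field; lra.
  - pose proof (sqrt_lt_R0 k Hk) as Hsq.
    pose proof (sqrt_sqrt k (Rlt_le _ _ Hk)) as Hsq2.
    fold k.
    exists (C * sqrt k / a), (S * sqrt k / b).
    assert (sq1 : forall s, s ^ 2 = 1 -> s = 1 \/ s = -1).
    { intros s Hs. assert ((s - 1) * (s + 1) = 0) by nra.
      apply Rmult_integral in H. lra. }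
    split; [apply sq1|split; [apply sq1|]].
    + replace ((C * sqrt k / a) ^ 2) with ((sqrt k * sqrt k * C ^ 2) / a ^ 2)
        by (field; lra). rewrite Hsq2.
      rewrite HC. field. lra.
    + replace ((S * sqrt k / b) ^ 2) with ((sqrt k * sqrt k * S ^ 2) / b ^ 2)
        by (field; lra). rewrite Hsq2.
      rewrite HS. field. lra.
    + f_equal; field; lra.
Qed.
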